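(* Let $G$ be a compact Lie group with normalized Haar measure, let $\Gamma$ be any finite graph with vertex set $\{1,\ldots,k\}$ that is a subgraph of the complete graph on $k$ vertices (no loops or multiple edges), and assign to each edge $e=\{i,j\}$, $i<j$, a finite-dimensional unitary representation $\rho_e$ of $G$. Then the evaluation of the corresponding relativistic spin network with symmetry $G\times G$, $$\int_{G^k}\prod_{e=\{i,j\},\,i<j}\chi_{\rho_e}(g_i g_j^{-1})\,dg_1\cdots dg_k,$$ is a non-negative real number. In particular, this holds for the relativistic (Barrett–Crane) spin networks with symmetry group $\mathrm{Spin}(4)\cong SU(2)\times SU(2)$ (or $SO(4)$) on any such graph.
   Context: $\chi_\rho(g)=\mathrm{tr}\,\rho(g)$. A relativistic spin network with symmetry $G\times G$ is a graph whose edges are labeled by representations of $G\times G$ of the form $V\otimes V^\ast$ ($V$ a representation of $G$) and whose vertices are labeled by the intertwiner given by a single integration over $G$ (the integral presentation of the Barrett–Crane intertwiner, $\int_G \bigotimes_{e\ni v}\rho_e(g)\,dg$ with the edge factors $V_e$, resp. $V_e^\ast$, at the two ends of the edge); with these conventions, contracting the intertwiners along the edges yields exactly the integral displayed in the claim, where $\rho_e$ is the representation $V$ labeling edge $e$. For $G=SU(2)$, the balanced representations $V\otimes V$ of $\mathrm{Spin}(4)$ are isomorphic to $V\otimes V^\ast$. *)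

(* Defs.v *)
From HB Require Import structures.
From mathcomp Require Import all_boot all_order all_algebra.
From mathcomp Require Import all_classical all_reals all_analysis.
From mathcomp Require Import complex.

Set Implicit Arguments.
Unset Strict Implicit.
Unset Printing Implicit Defensive.

Import Order.TTheory GRing.Theory Num.Theory.
Import numFieldNormedType.Exports.
Local Open Scope classical_set_scope.
Local Open Scope ring_scope.

Definition is_group (G : Type) (mul : G -> G -> G) (inv : G -> G) (one : G) :=
  [/\ associative mul, left_id one mul, right_id one mul,
      (forall x, mul (inv x) x = one) & (forall x, mul x (inv x) = one)].

Definition is_compact_topological_group (G : ptopologicalType)
    (mul : G -> G -> G) (inv : G -> G) (one : G) :=
  [/\ is_group mul inv one,
      continuous (fun p : G * G => mul p.1 p.2),
      continuous inv,
      compact [set: G] & hausdorff_space G].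

Definition adjmx (R : rcfType) (m n : nat) (M : 'M[R[i]]_(m, n)) : 'M[R[i]]_(n, m) :=
  map_mx Num.conj M^T.

Definition unitary_mx (R : rcfType) (n : nat) (M : 'M[R[i]]_n) :=
  M *m adjmx M = 1%:M.

(* continuity of a matrix-valued map (product topology on the entries,
   C = R^2 with its usual topology) *)
Definition mx_continuous (R : realType) (G : ptopologicalType) (m n : nat)
    (f : G -> 'M[R[i]]_(m, n)) :=
  forall (a : 'I_m) (b : 'I_n),
    continuous (fun g => complex.Re (f g a b)) /\ continuous (fun g => complex.Im (f g a b)).

Definition unitary_rep (R : realType) (G : ptopologicalType)
    (mul : G -> G -> G) (one : G) (n : nat) (rho : G -> 'M[R[i]]_n) :=
  [/\ (forall g h, rho (mul g h) = rho g *m rho h),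
      rho one = 1%:M,
      (forall g, unitary_mx (rho g)) & mx_continuous rho].

Definition character (R : rcfType) (G : Type) (n : nat)
    (rho : G -> 'M[R[i]]_n) (g : G) : R[i] := \tr (rho g).

(* A compact Lie group: a compact Hausdorff topological group which is
   (topologically) isomorphic to a closed subgroup of some U(n), i.e. which
   admits a faithful continuous finite-dimensional unitary representation. *)
Definition is_compact_Lie_group (R : realType) (G : ptopologicalType)
    (mul : G -> G -> G) (inv : G -> G) (one : G) :=
  is_compact_topological_group mul inv one /\
  exists (n : nat) (sigma : G -> 'M[R[i]]_n),
    unitary_rep mul one sigma /\ injective sigma.

Notation borelG G := (g_sigma_algebraType (@open G)).

Definition is_normalized_Haar (R : realType) (G : ptopologicalType)
    (mul : G -> G -> G) (mu : probability (borelG G) R) :=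
  forall (h : G) (A : set (borelG G)),
    measurable A -> mu (mul h @^-1` A) = mu A.

Definition cintegral (R : realType) (G : ptopologicalType)
    (mu : probability (borelG G) R) (f : G -> R[i]) : R[i] :=
  Complex (Rintegral mu setT (fun x => complex.Re (f x)))
          (Rintegral mu setT (fun x => complex.Im (f x))).

Definition tcons (G : Type) (k : nat) (x : G) (h : 'I_k -> G) : 'I_k.+1 -> G :=
  fun i => if unlift ord0 i is Some j then h j else x.

(* integral over G^k (as the iterated integral dg_1 ... dg_k; equal to the
   integral w.r.t. the product measure by Fubini for the continuous integrands
   considered here) *)
Fixpoint integral_Gk (R : realType) (G : ptopologicalType)
    (mu : probability (borelG G) R) (one : G) (k : nat) :
    (('I_k -> G) -> R[i]) -> R[i] :=
  match k with
  | 0 => fun F => F (fun _ => one)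
  | k'.+1 => fun F =>
      cintegral mu (fun x => integral_Gk mu one (fun h => F (tcons x h)))
  end.

Definition spin_network_eval (R : realType) (G : ptopologicalType)
    (mul : G -> G -> G) (inv : G -> G) (one : G)
    (mu : probability (borelG G) R) (k : nat) (E : {set 'I_k * 'I_k})
    (d : 'I_k * 'I_k -> nat) (rho : forall e : 'I_k * 'I_k, G -> 'M[R[i]]_(d e))
    : R[i] :=
  integral_Gk mu one (fun g : 'I_k -> G =>
    \prod_(e in E) character (rho e) (mul (g e.1) (inv (g e.2)))).

(* Main.v *)
Require Import Defs.
From HB Require Import structures.
From mathcomp Require Import all_boot all_order all_algebra.
From mathcomp Require Import all_classical all_reals all_analysis.
From mathcomp Require Import complex.
From mathcomp Require Import measurable_realfun ring.

Import Order.TTheory GRing.Theory Num.Theory.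
Import numFieldNormedType.Exports.
Local Open Scope ring_scope.
Local Open Scope classical_set_scope.
Set Implicit Arguments.
Unset Strict Implicit.
Notation Re := complex.Re.
Notation Im := complex.Im.

Section Cx.
Context (R : realType).
Lemma ReJ (x : R[i]) : Re (Num.conj x) = Re x. Proof. by case: x. Qed.
Lemma ImJ (x : R[i]) : Im (Num.conj x) = - Im x. Proof. by case: x. Qed.
Lemma ReM (x y : R[i]) : Re (x * y) = Re x * Re y - Im x * Im y.
Proof. by case: x; case: y. Qed.
Lemma ImM (x y : R[i]) : Im (x * y) = Re x * Im y + Im x * Re y.
Proof. by case: x; case: y. Qed.
Lemma ReD (x y : R[i]) : Re (x + y) = Re x + Re y. Proof. by case: x; case: y. Qed.
Lemma ImD (x y : R[i]) : Im (x + y) = Im x + Im y. Proof. by case: x; case: y. Qed.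
End Cx.

Section Single.
Context (R : realType) (G : ptopologicalType) (mu : probability (borelG G) R).
Context (Hcomp : compact [set: G]).

Lemma rcont_integrable (f : G -> R) : continuous f ->
  mu.-integrable setT (EFin \o f).
Proof.
move=> cf.
have mf : measurable_fun [set: borelG G] (EFin \o f).
  apply/measurable_EFinP.
  apply: (measurability _ (RGenOpens.measurableE R)).
  move=> _ [_ [a [b ->] <-]]; apply: sub_sigma_algebra.
  rewrite setTI; exact: (proj1 (continuousP f) cf _ (interval_open _ _)).
apply/integrableP; split => //.
have : compact (f @` [set: G]).
  apply: continuous_compact => //; exact: continuous_subspaceT.
move/compact_bounded => [M [_ HM]].
apply: (@le_lt_trans _ _ ((`|M| + 1)%:E * mu setT)%E).
  apply: integral_le_bound => //.
  apply: aeW => x _ /=; rewrite lee_fin; apply: HM; last by exists x.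
  by rewrite ltr_pwDr // ler_norm.
by rewrite probability_setT mule1 ltry.
Qed.

Definition ccont (f : G -> R[i]) :=
  continuous (fun x => Re (f x)) /\ continuous (fun x => Im (f x)).

Record cfun := CFun { cfval :> G -> R[i]; cfP : ccont cfval }.

Lemma ccont_cst c : ccont (fun _ => c).
Proof. by split => x; apply: cst_continuous. Qed.

Lemma ccont_add (f g : G -> R[i]) : ccont f -> ccont g -> ccont (fun x => f x + g x).
Proof.
move=> [f1 f2] [g1 g2]; split => x.
- under eq_fun do rewrite ReD. by apply: cvgD; [apply: f1|apply: g1].
- under eq_fun do rewrite ImD. by apply: cvgD; [apply: f2|apply: g2].
Qed.

Lemma ccont_mul (f g : G -> R[i]) : ccont f -> ccont g -> ccont (fun x => f x * g x).
Proof.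
move=> [f1 f2] [g1 g2]; split => x.
- under eq_fun do rewrite ReM.
  by apply: cvgB; apply: cvgM; [apply: f1|apply: g1|apply: f2|apply: g2].
- under eq_fun do rewrite ImM.
  by apply: cvgD; apply: cvgM; [apply: f1|apply: g2|apply: f2|apply: g1].
Qed.

Lemma ccont_conj (f : G -> R[i]) : ccont f -> ccont (fun x => Num.conj (f x)).
Proof.
move=> [f1 f2]; split => x.
- under eq_fun do rewrite ReJ. exact: f1.
- under eq_fun do rewrite ImJ. by apply: cvgN; apply: f2.
Qed.

Lemma ccont_comp (f : G -> R[i]) (h : G -> G) : ccont f -> continuous h ->
  ccont (fun x => f (h x)).
Proof.
move=> [f1 f2] ch; split => x.
- exact: (continuous_comp (ch x) (f1 (h x))).
- exact: (continuous_comp (ch x) (f2 (h x))).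
Qed.

Definition Rint (f : G -> R) := Rintegral mu setT f.
Definition J (f : G -> R[i]) := cintegral mu f.

Lemma Rint_lin (a b : R) (f g : G -> R) : continuous f -> continuous g ->
  Rint (fun x => a * f x + b * g x) = a * Rint f + b * Rint g.
Proof.
move=> cf cg; rewrite /Rint RintegralD //.
- by rewrite RintegralZl // ?RintegralZl //; apply: rcont_integrable.
- apply: rcont_integrable => x; apply: cvgM; [exact: cvg_cst | exact: cf].
- apply: rcont_integrable => x; apply: cvgM; [exact: cvg_cst | exact: cg].
Qed.


Lemma cx_ext (x y : R[i]) : Re x = Re y -> Im x = Im y -> x = y.
Proof. by case: x; case: y => /= a b c d -> ->. Qed.

Lemma Rint_add (f g : G -> R) : continuous f -> continuous g ->
  Rint (fun x => f x + g x) = Rint f + Rint g.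
Proof.
move=> cf cg; have := Rint_lin 1 1 cf cg; rewrite !mul1r => <-.
by apply: eq_Rintegral => x _; rewrite !mul1r.
Qed.

Lemma Rint_N (f : G -> R) : continuous f -> Rint (fun x => - f x) = - Rint f.
Proof.
move=> cf; have := Rint_lin (-1) 0 cf cf; rewrite mul0r addr0 mulN1r => <-.
by apply: eq_Rintegral => x _; rewrite mul0r addr0 mulN1r.
Qed.

Lemma Rint_cst (c : R) : Rint (fun _ => c) = c.
Proof.
rewrite /Rint Rintegral_cst //.
suff -> : fine (mu [set: borelG G]) = 1 by rewrite mulr1.
exact: (congr1 fine (probability_setT mu)).
Qed.

Lemma J_add (f g : cfun) : J (fun x => f x + g x) = J f + J g.
Proof.
case: f => f [f1 f2]; case: g => g [g1 g2] /=.
apply: cx_ext; rewrite ?ReD ?ImD /J /cintegral /=.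
- rewrite -Rint_add //; apply: eq_Rintegral => x _; exact: ReD.
- rewrite -Rint_add //; apply: eq_Rintegral => x _; exact: ImD.
Qed.

Lemma J_scale c (f : cfun) : J (fun x => c * f x) = c * J f.
Proof.
case: f => f [f1 f2] /=.
apply: cx_ext; rewrite ?ReM ?ImM /J /cintegral /=.
- transitivity (Rint (fun x => Re c * Re (f x) + (- Im c) * Im (f x))).
    by apply: eq_Rintegral => x _; rewrite ReM mulNr.
  by rewrite Rint_lin // mulNr.
- transitivity (Rint (fun x => Re c * Im (f x) + Im c * Re (f x))).
    by apply: eq_Rintegral => x _; rewrite ImM.
  by rewrite Rint_lin.
Qed.

Lemma J_conj (f : cfun) : J (fun x => Num.conj (f x)) = Num.conj (J f).
Proof.
case: f => f [f1 f2] /=.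
apply: cx_ext; rewrite ?ReJ ?ImJ /J /cintegral /=.
- apply: eq_Rintegral => x _; exact: ReJ.
- rewrite -Rint_N //; apply: eq_Rintegral => x _; exact: ImJ.
Qed.

Lemma J_cst c : J (fun _ => c) = c.
Proof. by apply: cx_ext; rewrite /J /cintegral /=; apply: Rint_cst. Qed.


Lemma Rint_trans (phi : G -> G) (u : G -> R) : continuous phi ->
  (forall A : set (borelG G), measurable A -> mu (phi @^-1` A) = mu A) ->
  continuous u -> Rint (fun x => u (phi x)) = Rint u.
Proof.
move=> cphi hphi cu.
have mphi : measurable_fun [set: borelG G] (phi : borelG G -> borelG G).
  apply: (@measurability _ _ (borelG G) (borelG G) setT phi (@open G)).
  - by [].
  move=> _ [U oU <-]; apply: sub_sigma_algebra; rewrite setTI.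
  exact: (proj1 (continuousP phi) cphi _ oU).
have /integrableP[mu_ _] := rcont_integrable cu.
have iu : mu.-integrable (phi @^-1` [set: borelG G]) ((EFin \o u) \o phi).
  rewrite preimage_setT; apply: (rcont_integrable (f := fun x => u (phi x))).
  move=> x; exact: (continuous_comp (cphi x) (cu (phi x))).
have := integral_pushforward mphi mu_ iu measurableT.
rewrite preimage_setT => h.
rewrite /Rint /Rintegral; congr fine.
apply: (etrans (esym h)).
apply: eq_measure_integral => A mA _; exact: hphi.
Qed.


Lemma J_trans (phi : G -> G) (f : cfun) : continuous phi ->
  (forall A : set (borelG G), measurable A -> mu (phi @^-1` A) = mu A) ->
  J (fun x => f (phi x)) = J f.
Proof.
case: f => f [f1 f2] cphi hphi /=.
apply: cx_ext; rewrite /J /cintegral /=.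
- exact: (Rint_trans (u := fun x => Re (f x))).
- exact: (Rint_trans (u := fun x => Im (f x))).
Qed.

Lemma ccont_sum (T : Type) (t : seq T) (a : T -> R[i]) (f : T -> cfun) :
  ccont (fun x => \sum_(p <- t) a p * f p x).
Proof.
elim: t => [|p t IH].
  under eq_fun do rewrite big_nil. exact: ccont_cst.
under eq_fun do rewrite big_cons.
apply: ccont_add => //; apply: ccont_mul; [exact: ccont_cst | exact: cfP].
Qed.

Lemma J_sum (T : Type) (t : seq T) (a : T -> R[i]) (f : T -> cfun) :
  J (fun x => \sum_(p <- t) a p * f p x) = \sum_(p <- t) a p * J (f p).
Proof.
elim: t => [|p t IH].
  rewrite big_nil (_ : (fun x => _) = fun _ => 0); first exact: J_cst.
  by apply/funext => x; rewrite big_nil.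
rewrite big_cons (_ : (fun x => _) = fun x =>
   (CFun (ccont_mul (ccont_cst (a p)) (cfP (f p)))) x +
   (CFun (ccont_sum t a f)) x); last first.
  by apply/funext => x; rewrite big_cons.
rewrite J_add /= J_scale -IH //.
Qed.

End Single.

Section Multi.
Context (R : realType) (G : ptopologicalType) (mu : probability (borelG G) R).
Context (Hcomp : compact [set: G]) (one : G).
Local Notation cfun := (@cfun R G).
Local Notation J := (J mu).

Definition rval k (s : seq (R[i] * ('I_k -> cfun))) (g : 'I_k -> G) : R[i] :=
  \sum_(p <- s) p.1 * \prod_(v < k) p.2 v (g v).
Definition Ival k (s : seq (R[i] * ('I_k -> cfun))) : R[i] :=
  \sum_(p <- s) p.1 * \prod_(v < k) J (p.2 v).

Lemma L1 k (s : seq (R[i] * ('I_k -> cfun))) :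
  integral_Gk mu one (rval s) = Ival s.
Proof.
elim: k s => [|k IH] s.
  by rewrite /= /rval /Ival; apply: eq_bigr => p _; rewrite !big_ord0.
rewrite /=.
pose s' (x : G) : seq (R[i] * ('I_k -> cfun)) :=
  [seq (p.1 * p.2 ord0 x, fun v => p.2 (lift ord0 v)) | p : R[i] * ('I_k.+1 -> cfun) <- s].
have E : forall x, (fun h => rval s (tcons x h)) = rval (s' x).
  move=> x; apply/funext => h; rewrite /rval big_map; apply: eq_bigr => p _ /=.
  rewrite big_ord_recl /tcons unlift_none mulrA; congr (_ * _).
  by apply: eq_bigr => v _; rewrite liftK.
rewrite (_ : (fun x => _) = fun x => \sum_(p <- s)
   (p.1 * \prod_(v < k) J (p.2 (lift ord0 v))) * p.2 ord0 x); last first.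
  apply/funext => x; rewrite E IH /Ival big_map; apply: eq_bigr => p _ /=.
  by rewrite mulrAC.
rewrite -/(J _) J_sum //.
rewrite /Ival; apply: eq_bigr => p _; rewrite big_ord_recl.
by rewrite -!mulrA (mulrC (J _)).
Qed.


Definition Sfun k (F : ('I_k -> G) -> R[i]) :=
  exists s : seq (R[i] * ('I_k -> cfun)), forall g, F g = rval s g.

Definition cone : cfun := CFun (@ccont_cst R G 1).
Definition cmul (f g : cfun) : cfun := CFun (ccont_mul (cfP f) (cfP g)).
Definition cconj (f : cfun) : cfun := CFun (ccont_conj (cfP f)).

Lemma Sfun_ext k (F F' : ('I_k -> G) -> R[i]) :
  (forall g, F g = F' g) -> Sfun F' -> Sfun F.
Proof. by move=> E [s Hs]; exists s => g; rewrite E Hs. Qed.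

Lemma Sfun_cst k c : Sfun (fun _ : 'I_k -> G => c).
Proof.
exists [:: (c, fun _ => cone)] => g.
by rewrite /rval big_cons big_nil addr0 /= big1 ?mulr1.
Qed.

Lemma Sfun_vertex k (v : 'I_k) (f : cfun) : Sfun (fun g => f (g v)).
Proof.
exists [:: (1, fun w => if w == v then f else cone)] => g.
rewrite /rval big_cons big_nil addr0 /= mul1r (bigD1 v) //= eqxx big1 ?mulr1 //.
by move=> w /negbTE ->.
Qed.

Lemma Sfun_add k (F1 F2 : ('I_k -> G) -> R[i]) :
  Sfun F1 -> Sfun F2 -> Sfun (fun g => F1 g + F2 g).
Proof.
move=> [s1 H1] [s2 H2]; exists (s1 ++ s2) => g.
by rewrite H1 H2 /rval big_cat.
Qed.

Lemma Sfun_scale k c (F : ('I_k -> G) -> R[i]) :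
  Sfun F -> Sfun (fun g => c * F g).
Proof.
move=> [s H]; exists [seq (c * p.1, p.2) | p <- s] => g.
rewrite H /rval big_map mulr_sumr; apply: eq_bigr => p _ /=; exact: mulrA.
Qed.

Lemma Sfun_mul k (F1 F2 : ('I_k -> G) -> R[i]) :
  Sfun F1 -> Sfun F2 -> Sfun (fun g => F1 g * F2 g).
Proof.
move=> [s1 H1] [s2 H2].
exists [seq (p.1 * q.1, fun v => cmul (p.2 v) (q.2 v)) | p <- s1, q <- s2] => g.
rewrite H1 H2 /rval big_allpairs_dep mulr_suml; apply: eq_bigr => p _.
rewrite mulr_sumr; apply: eq_bigr => q _ /=.
rewrite big_split /=; ring.
Qed.

Lemma Sfun_conj k (F : ('I_k -> G) -> R[i]) :
  Sfun F -> Sfun (fun g => Num.conj (F g)).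
Proof.
move=> [s H]; exists [seq (Num.conj p.1, fun v => cconj (p.2 v)) | p <- s] => g.
rewrite H /rval big_map rmorph_sum; apply: eq_bigr => p _ /=.
by rewrite rmorphM rmorph_prod.
Qed.

Lemma Sfun_sum k (T : Type) (r : seq T) (P : pred T)
    (Fs : T -> ('I_k -> G) -> R[i]) :
  (forall t, P t -> Sfun (Fs t)) -> Sfun (fun g => \sum_(t <- r | P t) Fs t g).
Proof.
move=> HF; elim: r => [|t r IH].
  apply: Sfun_ext (Sfun_cst _ 0) => g; exact: big_nil.
case Pt: (P t).
  apply: Sfun_ext (Sfun_add (HF t Pt) IH) => g; by rewrite big_cons Pt.
apply: Sfun_ext IH => g; by rewrite big_cons Pt.
Qed.

Lemma Sfun_prod k (T : Type) (r : seq T) (P : pred T)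
    (Fs : T -> ('I_k -> G) -> R[i]) :
  (forall t, P t -> Sfun (Fs t)) -> Sfun (fun g => \prod_(t <- r | P t) Fs t g).
Proof.
move=> HF; elim: r => [|t r IH].
  apply: Sfun_ext (Sfun_cst _ 1) => g; exact: big_nil.
case Pt: (P t).
  apply: Sfun_ext (Sfun_mul (HF t Pt) IH) => g; by rewrite big_cons Pt.
apply: Sfun_ext IH => g; by rewrite big_cons Pt.
Qed.

Notation IG := (integral_Gk mu one).

Lemma IG_rep k (F : ('I_k -> G) -> R[i]) s :
  (forall g, F g = rval s g) -> IG F = Ival s.
Proof. by move=> H; rewrite (_ : F = rval s) ?L1 //; apply/funext. Qed.

Lemma IG_add k (F1 F2 : ('I_k -> G) -> R[i]) :
  Sfun F1 -> Sfun F2 -> IG (fun g => F1 g + F2 g) = IG F1 + IG F2.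
Proof.
move=> [s1 H1] [s2 H2].
rewrite (IG_rep H1) (IG_rep H2) (@IG_rep _ _ (s1 ++ s2)) ?/Ival ?big_cat //.
by move=> g; rewrite H1 H2 /rval big_cat.
Qed.

Lemma IG_scale k c (F : ('I_k -> G) -> R[i]) :
  Sfun F -> IG (fun g => c * F g) = c * IG F.
Proof.
move=> [s H]; rewrite (IG_rep H) (@IG_rep _ _ [seq (c * p.1, p.2) | p <- s]).
  rewrite /Ival big_map mulr_sumr; apply: eq_bigr => p _ /=; exact: esym (mulrA _ _ _).
move=> g; rewrite H /rval big_map mulr_sumr; apply: eq_bigr => p _ /=; exact: mulrA.
Qed.

Lemma IG_conj k (F : ('I_k -> G) -> R[i]) :
  Sfun F -> IG (fun g => Num.conj (F g)) = Num.conj (IG F).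
Proof.
move=> [s H]; rewrite (IG_rep H)
  (@IG_rep _ _ [seq (Num.conj p.1, fun v => cconj (p.2 v)) | p <- s]).
  rewrite /Ival big_map rmorph_sum; apply: eq_bigr => p _ /=.
  rewrite rmorphM rmorph_prod; congr (_ * _); apply: eq_bigr => v _.
  exact: J_conj.
move=> g; rewrite H /rval big_map rmorph_sum; apply: eq_bigr => p _ /=.
by rewrite rmorphM rmorph_prod.
Qed.

Lemma IG_cst k c : IG (fun _ : 'I_k -> G => c) = c.
Proof.
rewrite (@IG_rep _ _ [:: (c, fun _ => cone)]).
  by rewrite /Ival big_cons big_nil addr0 /= big1 ?mulr1 // => v _; exact: J_cst.
by move=> g; rewrite /rval big_cons big_nil addr0 /= big1 ?mulr1.
Qed.

Lemma IG_lin k (T : Type) (t : seq T) (c : T -> R[i])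
    (Fs : T -> ('I_k -> G) -> R[i]) : (forall x, Sfun (Fs x)) ->
  IG (fun g => \sum_(x <- t) c x * Fs x g) = \sum_(x <- t) c x * IG (Fs x).
Proof.
move=> HF; elim: t => [|x t IH].
  rewrite big_nil (_ : (fun g => _) = fun _ => 0) ?IG_cst //.
  by apply/funext => g; rewrite big_nil.
rewrite big_cons -IG_scale // -IH -IG_add //.
- by congr (integral_Gk _ _ _); apply/funext => g; rewrite big_cons.
- exact: Sfun_scale.
- by apply: Sfun_sum => y _; apply: Sfun_scale.
Qed.


Lemma cont_mul (mul : G -> G -> G)
    (Hm : continuous (fun p : G * G => mul p.1 p.2)) a : continuous (mul a).
Proof.
move=> x.
apply: (@continuous2_cvg _ G G G (nbhs x) _ (fun=> a) id mul a x).
- exact: (Hm (a, x)).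
- exact: cvg_cst.
- exact: cvg_id.
Qed.

Lemma IG_trans (mul : G -> G -> G) (inv : G -> G)
    (Hm : continuous (fun p : G * G => mul p.1 p.2))
    (Hh : is_normalized_Haar mul mu) k (F : ('I_k -> G) -> R[i])
    (h : 'I_k -> G) :
  Sfun F -> IG (fun g => F (fun v => mul (inv (h v)) (g v))) = IG F.
Proof.
move=> [s H].
pose ct (a : G) (f : cfun) : cfun := CFun (ccont_comp (cfP f) (cont_mul Hm (a:=a))).
rewrite (IG_rep H)
  (@IG_rep _ _ [seq (p.1, fun v => ct (inv (h v)) (p.2 v)) | p <- s]).
  rewrite /Ival big_map; apply: eq_bigr => p _ /=; congr (_ * _).
  apply: eq_bigr => v _; apply: J_trans => //; first exact: cont_mul.
  by move=> A mA; apply: Hh.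
by move=> g; rewrite H /rval big_map.
Qed.

Definition Tker k (K : ('I_k -> G) -> ('I_k -> G) -> R[i]) :=
  exists s : seq {F : ('I_k -> G) -> R[i] | Sfun F},
    forall g h, K g h = \sum_(p <- s) sval p g * Num.conj (sval p h).

Lemma Tker_ext k (K K' : ('I_k -> G) -> ('I_k -> G) -> R[i]) :
  (forall g h, K g h = K' g h) -> Tker K' -> Tker K.
Proof. by move=> E [s Hs]; exists s => g h; rewrite E Hs. Qed.

Lemma Tker_zero k : Tker (fun _ _ : 'I_k -> G => 0).
Proof. by exists [::] => g h; rewrite big_nil. Qed.

Lemma Tker_one k : Tker (fun _ _ : 'I_k -> G => 1).
Proof.
exists [:: exist _ _ (Sfun_cst k 1)] => g h.
by rewrite big_cons big_nil addr0 /= rmorph1 mulr1.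
Qed.

Lemma Tker_rank1 k (F : ('I_k -> G) -> R[i]) :
  Sfun F -> Tker (fun g h => F g * Num.conj (F h)).
Proof.
move=> SF; exists [:: exist _ _ SF] => g h.
by rewrite big_cons big_nil addr0.
Qed.

Lemma Tker_add k (K1 K2 : ('I_k -> G) -> ('I_k -> G) -> R[i]) :
  Tker K1 -> Tker K2 -> Tker (fun g h => K1 g h + K2 g h).
Proof.
move=> [s1 H1] [s2 H2]; exists (s1 ++ s2) => g h.
by rewrite H1 H2 big_cat.
Qed.

Lemma Tker_mul k (K1 K2 : ('I_k -> G) -> ('I_k -> G) -> R[i]) :
  Tker K1 -> Tker K2 -> Tker (fun g h => K1 g h * K2 g h).
Proof.
move=> [s1 H1] [s2 H2].
exists [seq exist _ _ (Sfun_mul (svalP p) (svalP q)) | p <- s1, q <- s2] => g h.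
rewrite H1 H2 big_allpairs_dep mulr_suml; apply: eq_bigr => p _.
rewrite mulr_sumr; apply: eq_bigr => q _ /=.
rewrite rmorphM /=; ring.
Qed.

Lemma Tker_sum k (T : Type) (r : seq T) (P : pred T)
    (Ks : T -> ('I_k -> G) -> ('I_k -> G) -> R[i]) :
  (forall t, P t -> Tker (Ks t)) ->
  Tker (fun g h => \sum_(t <- r | P t) Ks t g h).
Proof.
move=> HK; elim: r => [|t r IH].
  apply: Tker_ext (Tker_zero k) => g h; exact: big_nil.
case Pt: (P t).
  apply: Tker_ext (Tker_add (HK t Pt) IH) => g h; by rewrite big_cons Pt.
apply: Tker_ext IH => g h; by rewrite big_cons Pt.
Qed.

Lemma Tker_prod k (T : Type) (r : seq T) (P : pred T)
    (Ks : T -> ('I_k -> G) -> ('I_k -> G) -> R[i]) :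
  (forall t, P t -> Tker (Ks t)) ->
  Tker (fun g h => \prod_(t <- r | P t) Ks t g h).
Proof.
move=> HK; elim: r => [|t r IH].
  apply: Tker_ext (Tker_one k) => g h; exact: big_nil.
case Pt: (P t).
  apply: Tker_ext (Tker_mul (HK t Pt) IH) => g h; by rewrite big_cons Pt.
apply: Tker_ext IH => g h; by rewrite big_cons Pt.
Qed.

End Multi.

Section Grp.
Context (G : Type) (mul : G -> G -> G) (inv : G -> G) (one : G).
Context (Hg : is_group mul inv one).

Lemma inv_uniq x y : mul x y = one -> y = inv x.
Proof.
case: Hg => A L Rr V1 V2 => H.
by rewrite -(L y) -(V1 x) -A H Rr.
Qed.

Lemma inv_mul a b : inv (mul a b) = mul (inv b) (inv a).
Proof.
case: Hg => A L Rr V1 V2; symmetry; apply: inv_uniq.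
by rewrite A -(A a b) V2 Rr V2.
Qed.

Lemma inv_one : inv one = one.
Proof. case: Hg => A L Rr V1 V2; symmetry; apply: inv_uniq; exact: L. Qed.

Lemma inv_inv x : inv (inv x) = x.
Proof. case: Hg => A L Rr V1 V2; symmetry; apply: inv_uniq; exact: V1. Qed.

Lemma mul1g x : mul one x = x.
Proof. by case: Hg. Qed.
End Grp.

Section Rep.
Context (R : realType).

Lemma adjmx_mul (m n p : nat) (A : 'M[R[i]]_(m, n)) (B : 'M[R[i]]_(n, p)) :
  adjmx (A *m B) = adjmx B *m adjmx A.
Proof. by rewrite /adjmx trmx_mul map_mxM. Qed.

Lemma adjmxK (m n : nat) (A : 'M[R[i]]_(m, n)) : adjmx (adjmx A) = A.
Proof. by apply/matrixP => i j; rewrite !mxE conjCK. Qed.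

Lemma adjmxE (m n : nat) (A : 'M[R[i]]_(m, n)) i j : adjmx A i j = Num.conj (A j i).
Proof. by rewrite !mxE. Qed.

Lemma tr_adj (n : nat) (A B : 'M[R[i]]_n) :
  \tr (A *m adjmx B) = \sum_(a < n) \sum_(c < n) A a c * Num.conj (B a c).
Proof.
rewrite /mxtrace; apply: eq_bigr => a _; rewrite mxE.
by apply: eq_bigr => c _; rewrite adjmxE.
Qed.

Lemma rep_inv (G : ptopologicalType) (mul : G -> G -> G) (inv : G -> G) (one : G)
    (n : nat) (rho : G -> 'M[R[i]]_n) :
  is_group mul inv one -> unitary_rep mul one rho ->
  forall x, rho (inv x) = adjmx (rho x).
Proof.
move=> Hg [Hm H1 Hu _] x.
have E1 : rho x *m rho (inv x) = 1%:M.
  by rewrite -Hm; case: Hg => _ _ _ _ ->; rewrite H1.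
have E2 : adjmx (rho x) *m rho x = 1%:M by apply: mulmx1C; exact: Hu.
by rewrite -[LHS]mul1mx -E2 -mulmxA E1 mulmx1.
Qed.
End Rep.

Unset Implicit Arguments.
Unset Strict Implicit.
Theorem corollary1 (R : realType) (G : ptopologicalType)
    (mul : G -> G -> G) (inv : G -> G) (one : G)
    (mu : probability (borelG G) R)
    (k : nat) (E : {set 'I_k * 'I_k})
    (d : 'I_k * 'I_k -> nat) (rho : forall e : 'I_k * 'I_k, G -> 'M[R[i]]_(d e)) :
  is_compact_Lie_group R mul inv one ->
  is_normalized_Haar mul mu ->
  (forall e, e \in E -> (e.1 < e.2)%N) ->
  (forall e, e \in E -> unitary_rep mul one (rho e)) ->
  0 <= spin_network_eval mul inv one mu E rho.
Proof.
move=> [[Hg Hm Hinv Hcomp Hhaus] _] Hh _ Hrep.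
pose M (e : 'I_k * 'I_k) (g : 'I_k -> G) := rho e (g e.1) *m adjmx (rho e (g e.2)).
pose Ke e (g h : 'I_k -> G) :=
  \sum_(a < d e) \sum_(c < d e) M e g a c * Num.conj (M e h a c).
have HKe : forall e, e \in E -> forall g h : 'I_k -> G,
    character (rho e) (mul (mul (inv (h e.1)) (g e.1))
                           (inv (mul (inv (h e.2)) (g e.2)))) = Ke e g h.
  move=> e eE g h; have Re := Hrep e eE; case: (Re) => Rm _ _ _.
  rewrite /character (inv_mul Hg) (inv_inv Hg) !Rm !(rep_inv Hg Re).
  rewrite /Ke -tr_adj /M adjmx_mul adjmxK.
  transitivity (\tr ((rho e (g e.1) *m (adjmx (rho e (g e.2)) *m rho e (h e.2)))
                    *m adjmx (rho e (h e.1)))).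
    by rewrite [RHS]mxtrace_mulC !mulmxA.
  by rewrite !mulmxA.
have SM : forall e, e \in E -> forall a c, Sfun (fun g : 'I_k -> G => M e g a c).
  move=> e eE a c; have [_ _ _ Hc] := Hrep e eE.
  apply: (Sfun_ext (F' := fun g => \sum_(b < d e)
     (CFun (Hc a b)) (g e.1) * (cconj (CFun (Hc c b))) (g e.2))).
    by move=> g; rewrite /M mxE; apply: eq_bigr => b _; rewrite adjmxE.
  apply: Sfun_sum => b _; apply: Sfun_mul; exact: Sfun_vertex.
have TKe : forall e, e \in E -> Tker (Ke e).
  move=> e eE.
  apply: (@Tker_sum _ _ _ _ _ _ (fun a g h => \sum_(c < d e) M e g a c * Num.conj (M e h a c))) => a _.
  apply: (@Tker_sum _ _ _ _ _ _ (fun c g h => M e g a c * Num.conj (M e h a c))) => c _.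
  exact: (Tker_rank1 (SM e eE a c)).
pose Kf (g h : 'I_k -> G) := \prod_(e in E) Ke e g h.
have [s Hs] : Tker Kf.
  by apply: (@Tker_prod _ _ _ _ _ _ Ke) => e eE; exact: TKe e eE.
pose F (g : 'I_k -> G) :=
  \prod_(e in E) character (rho e) (mul (g e.1) (inv (g e.2))).
have HFK : forall g h, F (fun v => mul (inv (h v)) (g v)) = Kf g h.
  by move=> g h; rewrite /F /Kf; apply: eq_bigr => e eE; exact: HKe.
have SF : Sfun F.
  apply: (Sfun_ext (F' := fun g =>
     \sum_(p <- s) Num.conj (sval p (fun _ => one)) * sval p g)).
    move=> g.
    have -> : F g = F (fun v => mul (inv ((fun _ => one) v)) (g v)).
      by congr F; apply/funext => v; rewrite (inv_one Hg) (mul1g Hg).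
    by rewrite HFK Hs; apply: eq_bigr => p _; exact: mulrC.
  by apply: Sfun_sum => p _; apply: Sfun_scale; exact: svalP.
have key : forall h, spin_network_eval mul inv one mu E rho =
    \sum_(p <- s) Num.conj (sval p h) * integral_Gk mu one (sval p).
  move=> h; rewrite /spin_network_eval -/F.
  rewrite -(IG_trans Hcomp one inv Hm Hh h SF).
  rewrite (_ : (fun g => F (fun v => mul (inv (h v)) (g v))) = fun g =>
      \sum_(p <- s) Num.conj (sval p h) * sval p g); last first.
    by apply/funext => g; rewrite HFK Hs; apply: eq_bigr => p _; exact: mulrC.
  by apply: IG_lin => // p; exact: svalP.
have -> : spin_network_eval mul inv one mu E rho = integral_Gk mu one (fun h : 'I_k -> G =>
    \sum_(p <- s) integral_Gk mu one (sval p) * Num.conj (sval p h)).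
  rewrite -[LHS](IG_cst mu Hcomp one k (spin_network_eval mul inv one mu E rho)).
  congr (integral_Gk _ _ _).
  by apply/funext => h; rewrite (key h); apply: eq_bigr => p _; exact: mulrC.
rewrite (@IG_lin _ _ mu Hcomp one _ _ s (fun p => integral_Gk mu one (sval p))
   (fun p h => Num.conj (sval p h))); last first.
  by move=> p; apply: Sfun_conj; exact: svalP.
apply: sumr_ge0 => p _; rewrite (IG_conj mu Hcomp one (svalP p)).
exact: mul_conjC_ge0.
Qed.
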